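(* For every $n\ge1$, $\langle r\rangle_{\mathrm{H}_n}=\frac{1}{2^nn!}\sum_{\sigma\in\mathrm{H}_n}r(\lambda_\sigma)=1$.
   Context: Signed factorization types: finitely supported $\lambda\colon\mathbb{N}\times\mathbb{N}\times\{1,-1,0\}\to\mathbb{Z}_{\ge0}$. $r(\lambda)=\prod_{d,e}(e+1)^{\lambda(d,e,1)}$ if $\lambda(d,e,-1)=0$ for all $d$ and all odd $e$, and $r(\lambda)=0$ otherwise. $\mathrm{H}_n=\mathbb{F}_2^n\rtimes S_n$ ($S_n$ permuting coordinates), elements $\sigma=x\tau$; $\lambda_\sigma(d,1,s)$ is the number of orbits $\Omega$ of $\tau$ on $\{1,\dots,n\}$ with $\#\Omega=d$ and $(-1)^{\sum_{i\in\Omega}x_i}=s$, and $\lambda_\sigma(d,e,s)=0$ for $e\ne1$. *)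

(* Defs.v *)
From HB Require Import structures.
From mathcomp Require Import all_boot all_order all_algebra all_fingroup.
Import GRing.Theory.
Set Implicit Arguments. Unset Strict Implicit. Unset Printing Implicit Defensive.

(* A signed factorization type  lambda : N x N x {1,-1,0} -> Z_{>=0}, finitely
   supported, is encoded as a finite multiset (a seq) of triples (d, e, s):
   lambda(d,e,s) = multiplicity of (d,e,s) in the seq.  Signs are integers,
   only the values 1, -1, 0 are meaningful. *)
Definition sftype := seq (nat * nat * int).

Definition sfval (l : sftype) (d e : nat) (s : int) : nat := count_mem (d, e, s) l.

Definition r_sf (l : sftype) : nat :=
  if has (fun t : nat * nat * int => (t.2 == (-1)%R) && odd t.1.2) l then 0
  else \prod_(t <- l | t.2 == 1%R) (t.1.2).+1.

(* Hyperoctahedral group H_n = F_2^n x| S_n, elements sigma = x tau. *)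
Definition Hn (n : nat) : finType := ({ffun 'I_n -> bool} * 'S_n)%type.

Definition orbit_sign n (x : {ffun 'I_n -> bool}) (Om : {set 'I_n}) : int :=
  if odd (\sum_(i in Om) (x i : nat)) then (-1)%R else 1%R.

Definition lambda_H n (sigma : Hn n) : sftype :=
  [seq (#|Om|, 1%N, orbit_sign sigma.1 Om) | Om : {set 'I_n} <- enum (porbits sigma.2)].

(* Main.v *)
Require Import Defs.
From HB Require Import structures.
From mathcomp Require Import all_boot all_order all_algebra all_fingroup.
Set Implicit Arguments. Unset Strict Implicit.

Section Key.
Variable T : finType.
Variable P : {set {set T}}.
Hypothesis hdisj : forall A B i, A \in P -> B \in P -> i \in A -> i \in B -> A = B.
Hypothesis hne : forall A, A \in P -> exists i, i \in A.

Definition par (x : {ffun T -> bool}) : {set {set T}} :=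
  [set O in P | odd (\sum_(i in O) (x i : nat))].

Definition rep (O : {set T}) := [pick j in O].

Lemma repP O : O \in P -> exists2 j, rep O = Some j & j \in O.
Proof.
rewrite /rep => OP; case: (pickP (mem O)) => [j jO | O0]; first by exists j.
by have [i iO] := hne OP; move: (O0 i); rewrite /= iO.
Qed.

Lemma repS O j : rep O = Some j -> j \in O.
Proof. by rewrite /rep; case: pickP => [k kO [<-]|]. Qed.

Definition yS (S : {set {set T}}) : {ffun T -> bool} :=
  [ffun i => [exists O in S, rep O == Some i]].

Definition fS S (x : {ffun T -> bool}) : {ffun T -> bool} :=
  [ffun i => x i (+) yS S i].

Lemma odd_sum_xor (O : {set T}) (x y : {ffun T -> bool}) :
  odd (\sum_(i in O) ((x i (+) y i) : nat)) =
  odd (\sum_(i in O) (x i : nat)) (+) odd (\sum_(i in O) (y i : nat)).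
Proof.
have H : \sum_(i in O) ((x i (+) y i) : nat) + (\sum_(i in O) (x i && y i : nat)).*2
   = \sum_(i in O) (x i : nat) + \sum_(i in O) (y i : nat).
  rewrite -big_split -mul2n big_distrr -big_split /=.
  by apply: eq_bigr => i _; case: (x i); case: (y i).
by rewrite -oddD -H oddD odd_double addbF.
Qed.

Lemma odd_yS (S : {set {set T}}) (O : {set T}) : S \subset P -> O \in P ->
  odd (\sum_(i in O) (yS S i : nat)) = (O \in S).
Proof.
move=> SP OP; have [j rj jO] := repP OP.
have yE : forall i, i \in O -> yS S i = (O \in S) && (i == j).
  move=> i iO; rewrite ffunE; apply/existsP/andP.
    case=> O' /andP[O'S /eqP pk].
    have E := hdisj (subsetP SP _ O'S) OP (repS pk) iO; subst O'.
    by split=> //; move: pk; rewrite rj => -[->].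
  by case=> OS /eqP ->; exists O; rewrite OS rj eqxx.
rewrite (eq_bigr (fun i => ((O \in S) && (i == j) : nat))); last first.
  by move=> i iO; rewrite yE.
rewrite (bigD1 j) //= eqxx andbT big1 ?addn0; first by case: (O \in S).
by move=> i /andP[_ /negbTE ->]; rewrite andbF.
Qed.

Lemma par_fS (S : {set {set T}}) x : S \subset P -> (par (fS S x) == set0) = (par x == S).
Proof.
move=> SP; apply/eqP/eqP => [H|H].
  apply/setP => O; move/setP: H => /(_ O); rewrite !inE.
  case OP: (O \in P) => /=; last by move=> _; apply/esym/negbTE; apply: contraFN OP; apply: (subsetP SP).
  rewrite (eq_bigr (fun i => (x i (+) yS S i : nat))); last by move=> i _; rewrite ffunE.
  by rewrite odd_sum_xor odd_yS //; case: odd; case: (O \in S).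
apply/setP => O; rewrite !inE.
case OP: (O \in P) => //=.
rewrite (eq_bigr (fun i => (x i (+) yS S i : nat))); last by move=> i _; rewrite ffunE.
rewrite odd_sum_xor odd_yS // -H inE OP /=; by case: odd.
Qed.

Lemma fS_inj (S : {set {set T}}) : injective (fS S).
Proof.
move=> x y E; apply/ffunP => i; have := congr1 (fun f : {ffun T -> bool} => f i) E; rewrite /= !ffunE.
by case: [exists _ in _, _]; rewrite ?addbT ?addbF // => /negb_inj.
Qed.

Lemma fiber (S : {set {set T}}) : S \subset P ->
  \sum_(x : {ffun T -> bool}) (par x == S : nat) = \sum_(x : {ffun T -> bool}) (par x == set0 : nat).
Proof.
move=> SP; rewrite [RHS](reindex_inj (@fS_inj S)) /=.
by apply: eq_bigr => x _; rewrite par_fS.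
Qed.

Lemma key : \sum_(x : {ffun T -> bool}) (par x == set0 : nat) * 2 ^ #|P| = 2 ^ #|T|.
Proof.
have -> : 2 ^ #|T| = \sum_(x : {ffun T -> bool}) \sum_(S in powerset P) (par x == S : nat).
  rewrite -[2]card_bool -card_ffun -sum1_card; apply: eq_bigr => x _.
  have pxP : par x \in powerset P by rewrite powersetE; apply/subsetP => O; rewrite inE => /andP[].
  rewrite (bigD1 (par x)) //= eqxx big1 // => S /andP[_ /negbTE].
  by rewrite eq_sym => ->.
rewrite exchange_big /=.
rewrite [RHS](eq_bigr (fun _ => \sum_(x : {ffun T -> bool}) (par x == set0 : nat))).
  by rewrite sum_nat_const card_powerset mulnC -big_distrl.
by move=> S; rewrite powersetE => SP; apply: fiber.
Qed.
End Key.

Lemma orbit_signE n (x : {ffun 'I_n -> bool}) O :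
  (orbit_sign x O == (-1)%R) = odd (\sum_(i in O) (x i : nat)).
Proof. by rewrite /orbit_sign; case: odd. Qed.

Lemma r_lambda n (x : {ffun 'I_n -> bool}) (s : 'S_n) :
  r_sf (lambda_H (x, s)) = (par (porbits s) x == set0) * 2 ^ #|porbits s|.
Proof.
rewrite /r_sf /lambda_H /= has_map; set h := has _ _.
case E: (par (porbits s) x == set0).
  have nodd : forall O, O \in porbits s -> ~~ odd (\sum_(i in O) (x i : nat)).
    move=> O OP; apply/negP => Ho; move/eqP/setP: E => /(_ O).
    by rewrite !inE OP Ho.
  have -> : h = false.
    apply/negbTE/hasPn => O; rewrite mem_enum => OP /=.
    by rewrite orbit_signE andbT nodd.
  rewrite big_map mul1n /= big_const_seq iter_muln_1 cardE -(count_predT (enum _)).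
  congr (2 ^ _); apply: eq_in_count => O; rewrite mem_enum => OP /=.
  by rewrite /orbit_sign (negbTE (nodd _ OP)).
have [O] : exists O, O \in par (porbits s) x by apply/set0Pn; rewrite E.
rewrite inE => /andP[OP Ho].
have -> // : h = true.
by apply/hasP; exists O; rewrite ?mem_enum //= orbit_signE Ho.
Qed.

Lemma porbits_disj n (s : 'S_n) : forall A B i, A \in porbits s -> B \in porbits s ->
  i \in A -> i \in B -> A = B.
Proof.
move=> A B i /imsetP[a _ ->] /imsetP[b _ ->] ia ib.
have e1 : porbit s i = porbit s a by apply/eqP; rewrite eq_porbit_mem.
have e2 : porbit s i = porbit s b by apply/eqP; rewrite eq_porbit_mem.
by rewrite -e1 -e2.
Qed.

Lemma porbits_ne n (s : 'S_n) : forall A, A \in porbits s -> exists i, i \in A.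
Proof. by move=> A /imsetP[a _ ->]; exists a; apply: porbit_id. Qed.

Lemma sum_all n : \sum_(sigma : Hn n) r_sf (lambda_H sigma) = 2 ^ n * n`!.
Proof.
rewrite -(pair_bigA _ (fun x s => r_sf (lambda_H (x, s)))) /= exchange_big /=.
rewrite (eq_bigr (fun _ => 2 ^ n)).
  by rewrite sum_nat_const card_Sn mulnC.
move=> s _; rewrite -[in RHS](card_ord n) -(key (@porbits_disj n s) (@porbits_ne n s)).
by apply: eq_bigr => x _; rewrite r_lambda.
Qed.

Theorem mainTheorem19 (n : nat) (hn : (1 <= n)%N) :
  ((\sum_(sigma : Hn n) r_sf (lambda_H sigma))%:R / (2 ^ n * n`!)%:R = 1 :> rat)%R.
Proof.
rewrite sum_all GRing.divff // Num.Theory.pnatr_eq0 muln_eq0 negb_or expn_eq0 /=.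
by rewrite -lt0n fact_gt0.
Qed.
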